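(* Fix an ordinal $\beta\leq\omega_1$ and consider $\mathbb{S}(\beta)$ with $\Lambda=\{A\subseteq I\times\beta: A_0\in\mathcal{B}(I),\ A_\alpha\in\{\emptyset,I\}\ \forall\,0<\alpha<\beta\}$. For every ordinal $\xi$: (i) if $\xi\leq\eta<\beta$, then every $\eta$-section of a member of $\mathcal{G}^\xi(\Lambda)$ is a Borel subset of $I$; (ii) if $\xi<\zeta+1<\beta$, then every $(\zeta+1)$-section of a member of $\mathcal{G}^\xi(\Lambda)$ is $\emptyset$ or $I$.
   Context: An LMP is $(S,\Sigma,\{\tau_a\}_{a\in L})$ with $L$ countable and Markov kernels $\tau_a$. $\Sigma(R)$ = $R$-closed members of $\Sigma$ ($A$ is $R$-closed if $x\in A$, $xRs\Rightarrow s\in A$); $\mathcal{R}^T(\Lambda)=\{(s,t):\forall a\,\forall E\in\Lambda\ \tau_a(s,E)=\tau_a(t,E)\}$; $\mathcal{G}(\Lambda)=\Sigma(\mathcal{R}^T(\Lambda))$, with $\mathcal{G}^0(\Lambda)=\Lambda$, $\mathcal{G}^{\alpha+1}(\Lambda)=\mathcal{G}(\mathcal{G}^\alpha(\Lambda))$, $\mathcal{G}^\lambda(\Lambda)=\sigma(\bigcup_{\alpha<\lambda}\mathcal{G}^\alpha(\Lambda))$ for limit $\lambda$. The processes $\mathbb{S}(\beta)$: $I=(0,1)$, $\mathfrak{m}$ Lebesgue measure, $V\subseteq I$ Lebesgue nonmeasurable, $\mathcal{B}_V=\sigma(\mathcal{B}(I)\cup\{V\})$, and $\mathfrak{m}_0,\mathfrak{m}_1$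 measures on $\mathcal{B}_V$ extending $\mathfrak{m}$ with $\mathfrak{m}_0(V)\neq\mathfrak{m}_1(V)$. Let $\{q_n\}_{n\in\omega}$ enumerate $\mathbb{Q}\cap I$. For ordinals $\eta$: $\alpha_n(0)=0$, $\alpha_n(\zeta+1)=\zeta$ for all $n$, and for limit $\lambda$, $(\alpha_n(\lambda))_{n\in\omega}$ is a fixed strictly increasing sequence of nonzero ordinals below $\lambda$ cofinal in $\lambda$. For an ordinal $\beta\leq\omega_1$, $\mathbb{S}(\beta)=(I\times\beta,\ \mathcal{B}_V\otimes\mathcal{P}(\beta),\ \{\tau_n\}_{n\in\omega})$ with $\tau_n((x,\eta),A)=x\cdot\mathfrak{m}_0(A_0)$ if $\eta=0$; $=\mathfrak{m}_0(A_{\alpha_n(\eta)})$ if $\eta>0$ and $x<q_n$; $=\mathfrak{m}_1(A_{\alpha_n(\eta)})$ if $\eta>0$ and $x\geq q_n$; here $A_\gamma=\{r:(r,\gamma)\in A\}$. These $\tau_n$ are Markov kernels, so $\mathbb{S}(\beta)$ is an LMP. *)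

(* Defs.v *)
From HB Require Import structures.
From mathcomp Require Import all_boot all_order all_algebra.
From mathcomp Require Import all_classical all_reals all_analysis.
Set Implicit Arguments.
Unset Strict Implicit.
Unset Printing Implicit Defensive.
Import Order.TTheory GRing.Theory Num.Theory.
Import numFieldNormedType.Exports.
Local Open Scope classical_set_scope.
Local Open Scope ring_scope.

(* Generic LMP notions.  An LMP has state set [D : set S] (inside an   *)
(* ambient type S), sigma-algebra [Sig] on D, labels L = nat, and      *)
(* kernels [tau a s E].                                                *)
Section LMPnotions.
Context {R : realType} {S : Type}.

Definition rel_closed (Rel : S -> S -> Prop) (A : set S) : Prop :=
  forall x s, A x -> Rel x s -> A s.

Definition Sigma_rel (Sig : set (set S)) (Rel : S -> S -> Prop) : set (set S) :=
  [set A | Sig A /\ rel_closed Rel A].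

Definition RT (D : set S) (tau : nat -> S -> set S -> \bar R)
    (Lam : set (set S)) (s t : S) : Prop :=
  D s /\ D t /\ forall (a : nat) (E : set S), Lam E -> tau a s E = tau a t E.

Definition Gop (D : set S) (Sig : set (set S))
    (tau : nat -> S -> set S -> \bar R) (Lam : set (set S)) : set (set S) :=
  Sigma_rel Sig (RT D tau Lam).
End LMPnotions.

(* Ordinals are represented by a well-ordered type O (an ordinal beta *)
(* is the well-ordered set of its elements).                          *)
Section Ordinals.
Context {d : Order.disp_t} {O : orderType d}.

Definition is_zero (x : O) : Prop := forall y, ~ (y < x)%O.
(* x = z + 1 *)
Definition is_succ (z x : O) : Prop :=
  (z < x)%O /\ forall y, ~ ((z < y)%O /\ (y < x)%O).
Definition is_limit (x : O) : Prop := ~ is_zero x /\ ~ (exists z, is_succ z x).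

(* Transfinite iteration G^xi(Lam), by well-founded recursion on O:
   G^0 = Lam, G^(z+1) = G(G^z), G^lambda = sigma(U_{a<lambda} G^a). *)
Definition Giter {R : realType} {S : Type}
    (wf : well_founded (fun x y : O => (x < y)%O))
    (D : set S) (Sig : set (set S)) (tau : nat -> S -> set S -> \bar R)
    (Lam : set (set S)) : O -> set (set S) :=
  Fix wf (fun _ => set (set S)) (fun x rec =>
    match pselect (exists z, is_succ z x) with
    | left h =>
        Gop D Sig tau (rec (proj1_sig (cid h)) (proj1 (proj2_sig (cid h))))
    | right _ =>
        if pselect (is_zero x) then Lam
        else <<s D, [set A | exists y (hy : (y < x)%O), rec y hy A] >>
    end).
End Ordinals.

Section Sbeta.
Context {R : realType}.

Definition Iset : set R := [set x | 0 < x < 1].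

Definition Borel_I (A : set R) : Prop :=
  @measurable _ (measurableTypeR R) A /\ A `<=` Iset.

(* Lebesgue measurable subsets of R (completion of Lebesgue measure) *)
Definition lebesgue_measurable (A : set R) : Prop :=
  @measurable _ (caratheodory_type (R:=R)
     (T:=lebesgue_stieltjes_measure_ocitv_type__canonical__measurable_structure_SemiRingOfSets R)
     (wlength idfun)^*%mu) A.

Definition B_V (V : set R) : set (set R) := <<s Iset, Borel_I `|` [set V] >>.

Definition measure_on {T : Type} (F : set (set T)) (mu : set T -> \bar R) : Prop :=
  mu set0 = 0%E /\ (forall A, F A -> (0 <= mu A)%E) /\
  (forall A : nat -> set T, (forall n, F (A n)) -> trivIset setT A ->
     F (\bigcup_n A n) ->
     (fun n => \sum_(0 <= i < n) mu (A i)) @ \oo --> mu (\bigcup_n A n)).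

Context {d : Order.disp_t} {O : orderType d}.

Definition Dstates : set (R * O) := Iset `*` setT.

Definition section (A : set (R * O)) (g : O) : set R := [set r | A (r, g)].

Definition SigS (V : set R) : set (set (R * O)) :=
  <<s Dstates, [set X | exists B C, B_V V B /\ X = B `*` C] >>.

Definition tauS (alpha : nat -> O -> O) (q : nat -> R)
    (m0 m1 : set R -> \bar R) (n : nat) (s : R * O) (A : set (R * O)) : \bar R :=
  if pselect (is_zero s.2) then ((s.1)%:E * m0 (section A s.2))%E
  else if s.1 < q n then m0 (section A (alpha n s.2))
  else m1 (section A (alpha n s.2)).

Definition LambdaS : set (set (R * O)) :=
  [set A | A `<=` Dstates /\
     (forall z, is_zero z -> Borel_I (section A z)) /\
     (forall a, ~ is_zero a -> section A a = set0 \/ section A a = Iset)].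
End Sbeta.

(* Main.v *)
Require Import Defs.
From HB Require Import structures.
From mathcomp Require Import all_boot all_order all_algebra.
From mathcomp Require Import all_classical all_reals all_analysis.
Import Order.TTheory GRing.Theory Num.Theory.
Local Open Scope classical_set_scope.
Local Open Scope ring_scope.
Set Implicit Arguments.
Unset Strict Implicit.

Section GiterLemmas.
Context {R : realType} {S : Type} {d : Order.disp_t} {O : orderType d}.
Variable (wf : well_founded (fun x y : O => (x < y)%O)).
Variables (D : set S) (Sig : set (set S)) (tau : nat -> S -> set S -> \bar R)
  (Lam : set (set S)).

Let GI := Giter wf D Sig tau Lam.

Lemma succ_uniq (z z' x : O) : is_succ z x -> is_succ z' x -> z = z'.
Proof.
move=> [h1 h2] [h1' h2']; case: (ltgtP z z') => // h.
- by exfalso; apply: (h2 z'); split.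
- by exfalso; apply: (h2' z); split.
Qed.

Lemma Giter_unfold (x : O) : GI x =
    match pselect (exists z, is_succ z x) with
    | left h =>
        Gop D Sig tau (GI (proj1_sig (cid h)))
    | right _ =>
        if pselect (is_zero x) then Lam
        else <<s D, [set A | exists y (hy : (y < x)%O), GI y A] >>
    end.
Proof.
rewrite /GI /Giter; rewrite Fix_eq //.
move=> y f g Hfg; case: pselect => [h|h]; first by rewrite Hfg.
destruct (pselect (is_zero y)) => //.
congr (<<s D, _>>); apply/funext => A; apply/propext; split.
- by move=> [z [hz H]]; exists z, hz; rewrite -Hfg.
- by move=> [z [hz H]]; exists z, hz; rewrite Hfg.
Qed.

Lemma Giter_succ z x : is_succ z x -> GI x = Gop D Sig tau (GI z).
Proof.
move=> hz; rewrite Giter_unfold; destruct (pselect (exists z, is_succ z x)) as [h|h]; last by exfalso; apply: h; exists z.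
by rewrite (succ_uniq (proj2_sig (cid h)) hz).
Qed.

Lemma Giter_zero x : is_zero x -> GI x = Lam.
Proof.
move=> hx; rewrite Giter_unfold; destruct (pselect (exists z, is_succ z x)) as [h|_]; first by exfalso; case: h => z [hz _]; case: (hx z).
by destruct (pselect (is_zero x)).
Qed.

Lemma Giter_lim x : ~ is_zero x -> ~ (exists z, is_succ z x) ->
  GI x = <<s D, [set A | exists y (hy : (y < x)%O), GI y A] >>.
Proof.
move=> h0 h1; rewrite Giter_unfold; destruct (pselect (exists z, is_succ z x)) => //.
by destruct (pselect (is_zero x)).
Qed.
End GiterLemmas.
Lemma gen_sub T (D : set T) (G : set (set T)) :
  (forall A, G A -> A `<=` D) -> forall A, <<s D, G>> A -> A `<=` D.
Proof.
move=> hG A hA; apply: (@smallest_sub _ (sigma_algebra D) G [set A | A `<=` D]) => //.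
split.
- by [].
- by move=> B _ x [].
- by move=> F hF x [n _ /hF].
Qed.

Section Sat.
Context {R : realType}.

Lemma Iset_meas : measurable (@Iset R).
Proof.
have -> : @Iset R = [set` `]0, 1[%R] by apply/seteqP; split => x; rewrite /= in_itv.
exact: measurable_itv.
Qed.

Lemma sat0 (X : set R) : X `<=` Iset ->
  (forall x y, Iset x -> Iset y -> X x -> X y) -> X = set0 \/ X = Iset.
Proof.
move=> hs hX; have [[x hx]|nx] := pselect (exists x, X x).
- right; apply/seteqP; split => // y hy; exact: hX x y (hs x hx) hy hx.
- left; apply/seteqP; split => // y hy; apply: nx; by exists y.
Qed.

Lemma satN (q : nat -> R) N : forall X : set R, X `<=` Iset ->
  (forall x y, Iset x -> Iset y -> (forall n, (n < N)%N -> (x < q n) = (y < q n)) ->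
     X x -> X y) -> measurable X.
Proof.
elim: N => [|N IH] X hs hX.
  case: (sat0 hs) => [x y hx hy|->|->]; last exact: Iset_meas; last exact: measurable0.
  by apply: hX => // n.
pose X1 := [set y | Iset y /\ exists x, X x /\ x < q N /\
   forall n, (n < N)%N -> (x < q n) = (y < q n)].
pose X2 := [set y | Iset y /\ exists x, X x /\ q N <= x /\
   forall n, (n < N)%N -> (x < q n) = (y < q n)].
have sat1 : forall x y, Iset x -> Iset y -> (forall n, (n < N)%N -> (x < q n) = (y < q n)) ->
     X1 x -> X1 y.
  move=> x y _ hy hxy [_ [w [hw [hwq hwx]]]]; split => //; exists w; split => //; split => //.
  by move=> n hn; rewrite hwx // hxy.
have sat2 : forall x y, Iset x -> Iset y -> (forall n, (n < N)%N -> (x < q n) = (y < q n)) ->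
     X2 x -> X2 y.
  move=> x y _ hy hxy [_ [w [hw [hwq hwx]]]]; split => //; exists w; split => //; split => //.
  by move=> n hn; rewrite hwx // hxy.
have m1 : measurable X1 by apply: IH => // y [].
have m2 : measurable X2 by apply: IH => // y [].
have -> : X = (X1 `&` [set` `]-oo, q N[%R]) `|` (X2 `&` [set` `[q N, +oo[%R]).
  apply/seteqP; split => y.
  - move=> hy; have hI := hs y hy.
    have [h|h] := ltP y (q N).
    + by left; split; [split => //; exists y | rewrite /= in_itv /= h].
    + by right; split; [split => //; exists y | rewrite /= in_itv /= h].
  - case=> [[[hI [x [hx [hxq hxy]]]] ]|[[hI [x [hx [hxq hxy]]]] ]]; rewrite /= in_itv /= ?andbT => hyq.
    + apply: (hX x y (hs x hx) hI) => // n; rewrite ltnS leq_eqVlt => /orP[/eqP->|hn].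
        by rewrite hxq hyq.
      exact: hxy.
    + apply: (hX x y (hs x hx) hI) => // n; rewrite ltnS leq_eqVlt => /orP[/eqP->|hn].
        by rewrite !ltNge hxq hyq.
      exact: hxy.
apply: measurableU; apply: measurableI => //; exact: measurable_itv.
Qed.
End Sat.
Unset Implicit Arguments.
Set Strict Implicit.

Theorem lemma5p6
  (R : realType) (d : Order.disp_t) (O : orderType d)
  (* O is the ordinal beta: a well-order ... *)
  (wfO : well_founded (fun x y : O => (x < y)%O))
  (* ... with beta <= omega_1 *)
  (ctblO : forall x : O, countable [set y : O | (y < x)%O])
  (* the sequences alpha_n *)
  (alpha : nat -> O -> O)
  (alpha_zero : forall n x, is_zero x -> alpha n x = x)
  (alpha_succ : forall n z x, is_succ z x -> alpha n x = z)
  (alpha_lim_lt : forall n l, is_limit l ->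
     ~ is_zero (alpha n l) /\ (alpha n l < l)%O)
  (alpha_lim_incr : forall n l, is_limit l -> (alpha n l < alpha n.+1 l)%O)
  (alpha_lim_cof : forall l y, is_limit l -> (y < l)%O ->
     exists n, (y <= alpha n l)%O)
  (* enumeration of Q cap I *)
  (q : nat -> R) (q_inj : injective q)
  (q_range : range q = [set x | Iset x /\ exists r : rat, x = ratr r])
  (* the nonmeasurable set V and the measures m0, m1 *)
  (V : set R) (V_sub : V `<=` Iset) (V_nonmeas : ~ lebesgue_measurable V)
  (m0 m1 : set R -> \bar R)
  (m0_meas : measure_on (B_V V) m0) (m1_meas : measure_on (B_V V) m1)
  (m0_ext : forall A, Borel_I A -> m0 A = lebesgue_measure A)
  (m1_ext : forall A, Borel_I A -> m1 A = lebesgue_measure A)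
  (m01 : m0 V <> m1 V) :
  let G := Giter wfO (@Dstates R d O) (SigS V) (tauS alpha q m0 m1)
             (@LambdaS R d O) in
  (forall (xi eta : O), (xi <= eta)%O ->
     forall A, G xi A -> Borel_I (section A eta)) /\
  (forall (xi z z1 : O), is_succ z z1 -> (xi < z1)%O ->
     forall A, G xi A -> section A z1 = set0 \/ section A z1 = Iset).
Proof.
move=> G.
have SigD : forall A, SigS V A -> A `<=` (@Dstates R d O).
  apply: gen_sub => _ [B [C [hB ->]]] [x y] [/= hx _]; split => //.
  by apply: (gen_sub _ hB) hx => E [[]|->].
have evN : forall (zt eta : O), (zt < eta)%O -> ~ is_zero eta ->
    exists N, forall n, (N <= n)%N -> (zt <= alpha n eta)%O.
  move=> zt eta hlt hnz.
  have [[e he]|ns] := pselect (exists e, is_succ e eta).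
    exists 0%N => n _; rewrite (alpha_succ n _ _ he).
    case: (leP zt e) => // hez; exfalso; apply: (proj2 he zt); split => //.
  have [N hN] := alpha_lim_cof eta zt (conj hnz ns) hlt.
  exists N; elim => [|n IHn]; first by rewrite leqn0 => /eqP <-.
  rewrite leq_eqVlt => /orP[/eqP <- //|]; rewrite ltnS => /IHn h.
  apply: (le_trans h); apply: ltW; exact: (alpha_lim_incr n eta (conj hnz ns)).
have key : forall (zt eta : O) (N : nat), ~ is_zero eta ->
    (forall n, (N <= n)%N -> forall E, G zt E -> Borel_I (section E (alpha n eta))) ->
    forall x y, Iset x -> Iset y -> (forall n, (n < N)%N -> (x < q n) = (y < q n)) ->
    RT (@Dstates R d O) (tauS alpha q m0 m1) (G zt) (x, eta) (y, eta).
  move=> zt eta N hnz hB x y hx hy hxy; split; first by split.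
  split; first by split.
  move=> n E hE; rewrite /tauS /=.
  destruct (pselect (is_zero eta)) as [h|hn0]; first by case: hnz.
  case: (ltnP n N) => hn; first by rewrite hxy.
  have hb := hB n hn E hE.
  by case: ifP; case: ifP; rewrite ?m0_ext ?m1_ext.
suff H : forall xi, (forall eta, (xi <= eta)%O -> forall A, G xi A -> Borel_I (section A eta)) /\
   (forall z z1, is_succ z z1 -> (xi < z1)%O -> forall A, G xi A ->
      section A z1 = set0 \/ section A z1 = Iset).
  split => [xi eta h A|xi z z1 h1 h2 A]; [exact: (proj1 (H xi)) | exact: ((proj2 (H xi)) z z1 h1 h2)].
apply: (well_founded_ind wfO) => xi IH.
have [[z hz]|nsucc] := pselect (exists z, is_succ z xi).
-
  have [IH1 _] := IH z (proj1 hz).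
  rewrite /G (Giter_succ _ _ _ _ _ hz) -/G.
  have sec : forall (eta : O) N A, (z < eta)%O -> Gop Dstates (SigS V) (tauS alpha q m0 m1) (G z) A ->
      (forall n, (N <= n)%N -> (z <= alpha n eta)%O) ->
      section A eta `<=` Iset /\
      (forall x y, Iset x -> Iset y -> (forall n, (n < N)%N -> (x < q n) = (y < q n)) ->
        section A eta x -> section A eta y).
    move=> eta N A hlt [hS hcl] hN; split.
      by move=> r /= /(SigD A hS) [].
    move=> x y hx hy hxy hAx; apply: (hcl (x, eta) (y, eta) hAx).
    apply: (key z eta N) => //.
      by move=> hzero; case: (hzero z).
    by move=> n hn E hE; apply: IH1 => //; exact: hN.
  split.
  + move=> eta hle A hA.
    have hlt : (z < eta)%O := lt_le_trans (proj1 hz) hle.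
    have hnz : ~ is_zero eta by move=> h0; case: (h0 z).
    have [N hN] := evN z eta hlt hnz.
    have [s1 s2] := sec eta N A hlt hA hN.
    split => //; exact: satN s1 s2.
  + move=> z0 z1 hs hlt A hA.
    have hzz1 : (z < z1)%O := lt_trans (proj1 hz) hlt.
    have hz0 : (z <= z0)%O.
      case: (leP z z0) => // h; exfalso; apply: (proj2 hs z); split => //.
    have [s1 s2] := sec z1 0%N A hzz1 hA (fun n _ => eq_ind_r (fun w => (z <= w)%O) hz0 (alpha_succ n _ _ hs)).
    by apply: sat0 => // x y hx hy; apply: s2.
have [hzero|nzero] := pselect (is_zero xi).
-
  rewrite /G (Giter_zero _ _ _ _ _ hzero) -/G.
  split.
  + move=> eta _ A [_ [h0 h1]].
    have [/h0 //|hnz] := pselect (is_zero eta).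
    by case: (h1 _ hnz) => ->; split => //; first [exact: measurable0 | exact: Iset_meas].
  + move=> z z1 hs _ A [_ [_ h1]]; apply: h1 => h0; exact: (h0 z (proj1 hs)).
-
  rewrite /G (Giter_lim _ _ _ _ _ nzero nsucc) -/G.
  split.
  + move=> eta hle.
    apply: (@smallest_sub _ (sigma_algebra Dstates) _ [set A | Borel_I (section A eta)]).
    * split.
      -- by split; [exact: measurable0|].
      -- move=> A [hm hs]; split; last by move=> r [[]].
         have -> : section (Dstates `\` A) eta = Iset `\` section A eta.
           by apply/seteqP; split => r /= [h1 h2]; split => //; try (case: h1 => //); split.
         exact: measurableD Iset_meas hm.
      -- move=> F hF /=.
         have -> : section (\bigcup_k F k) eta = \bigcup_k section (F k) eta.
           by apply/seteqP; split => r /= [k _ h]; exists k.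
         split; first by apply: bigcupT_measurable => k; exact: (proj1 (hF k)).
         by move=> r [k _ h]; exact: (proj2 (hF k)).
    * move=> A [y [hy hA]]; apply: (proj1 (IH y hy)) => //.
      exact: ltW (lt_le_trans hy hle).
  + move=> z z1 hs hlt.
    apply: (@smallest_sub _ (sigma_algebra Dstates) _
       [set A | section A z1 = set0 \/ section A z1 = Iset]).
    * split.
      -- by left.
      -- move=> A hA /=.
         have -> : section (Dstates `\` A) z1 = Iset `\` section A z1.
           by apply/seteqP; split => r /= [h1 h2]; split => //; try (case: h1 => //); split.
         by case: hA => ->; [right; rewrite setD0 | left; rewrite setDv].
      -- move=> F hF /=.
         have -> : section (\bigcup_k F k) z1 = \bigcup_k section (F k) z1.
           by apply/seteqP; split => r /= [k _ h]; exists k.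
         have [[k hk]|nk] := pselect (exists k, section (F k) z1 = Iset).
           right; apply/seteqP; split; last by move=> r hr; exists k => //; rewrite hk.
           move=> r [j _]; case: (hF j) => ->//.
         left; apply/seteqP; split => // r [j _]; case: (hF j) => [->//|hj].
         by exfalso; apply: nk; exists j.
    * move=> A [y [hy hA]]; apply: (proj2 (IH y hy)) hs _ A hA.
      exact: lt_trans hy hlt.
Qed.
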